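(* Let \(X\) be a complete metric space, \(n\geq 1\), and \(T\colon \mathcal{D}^n(X)\to\mathbb{R}\) a multilinear functional. Then \(T\) is a current if and only if it is an \(\mathbf{L}^\infty\)-current. Moreover, \(\|T\|=\|T\|_{\mathbf{L}^\infty}\).
   Context: \(\mathcal{D}^n(X)\) is the set of pairs \((f,\pi)\) with \(f\colon X\to\mathbb{R}\) bounded Lipschitz and \(\pi=(\pi^{(1)},\dots,\pi^{(n)})\colon X\to\mathbb{R}^n\) Lipschitz; ''multilinear'' means multilinear in \((f,\pi^{(1)},\dots,\pi^{(n)})\). For a map \(g\) between metric spaces, \(\mathrm{Lip}(g)\) denotes its best Lipschitz constant. Given a seminorm \(\mathbf{L}\colon \mathrm{Lip}(X,\mathbb{R}^n)\to\mathbb{R}\) (a ''Lipschitz norm''), a multilinear \(T\colon\mathcal{D}^n(X)\to\mathbb{R}\) is an \(\mathbf{L}\)-current if: (1) whenever \(\pi_i\to\pi\) pointwise with \(\pi\in\mathrm{Lip}(X,\mathbb{R}^n)\) and \(\sup_i\mathbf{L}(\pi_i)<\infty\), then \(T(f,\pi_i)\to T(f,\pi)\); (2) \(T(f,\pi)=0\) whenever some \(\pi^{(i)}\) is constant on an open neighborhood of \(\mathrm{spt}(f)\); (3) there is a finite Borel measure \(\mu\) on \(X\) with \(|T(f,\pi)|\le \mathbf{L}(\pi)^n\int_X|f|\,d\mu\) for all \((f,\pi)\in\mathcal{D}^n(X)\). The minimal such \(\mu\) is the mass measure \(\|T\|_{\mathbf{L}}\). \(T\) is a current (in the sense of Ambrosio–Kirchheim)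 if it satisfies the same three conditions with ''\(\sup_i\mathbf{L}(\pi_i)<\infty\)'' replaced by ''\(\sup_{i,j}\mathrm{Lip}(\pi_i^{(j)})<\infty\)'' and with \(\mathbf{L}(\pi)^n\) replaced by \(\prod_{i=1}^n\mathrm{Lip}(\pi^{(i)})\); its mass measure \(\|T\|\) is the minimal measure \(\mu\) in the corresponding inequality. \(\mathbf{L}^\infty(\pi)=\max_{i=1,\dots,n}\mathrm{Lip}(\pi^{(i)})\). *)

(* Defs.v *)
From HB Require Import structures.
From mathcomp Require Import all_boot all_order all_algebra.
From mathcomp Require Import all_classical all_reals all_analysis.
Set Implicit Arguments. Unset Strict Implicit. Unset Printing Implicit Defensive.
Import Order.TTheory GRing.Theory Num.Theory.
Import numFieldNormedType.Exports.
Local Open Scope classical_set_scope.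
Local Open Scope ring_scope.

Section MetricDefs.
Variables (R : realType) (X : Type) (d : X -> X -> R).

Definition is_metric : Prop :=
  [/\ forall x y, 0 <= d x y,
      forall x y, d x y = 0 <-> x = y,
      forall x y, d x y = d y x
    & forall x y z, d x z <= d x y + d y z].

Definition dcauchy (u : nat -> X) : Prop :=
  forall e : R, 0 < e -> exists N : nat,
    forall m k, (N <= m)%N -> (N <= k)%N -> d (u m) (u k) < e.

Definition dconverges (u : nat -> X) (x : X) : Prop :=
  forall e : R, 0 < e -> exists N : nat, forall m, (N <= m)%N -> d (u m) x < e.

Definition dcomplete : Prop := forall u, dcauchy u -> exists x, dconverges u x.

Definition dopen (U : set X) : Prop :=
  forall x, U x -> exists2 r : R, 0 < r & forall y, d x y < r -> U y.

Definition dclosure (A : set X) : set X :=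
  [set x | forall r : R, 0 < r -> exists2 y, A y & d x y < r].

Definition spt (f : X -> R) : set X := dclosure [set x | f x != 0].

Definition lip_with (g : X -> R) (L : R) : Prop :=
  0 <= L /\ forall x y, `|g x - g y| <= L * d x y.

Definition is_lip (g : X -> R) : Prop := exists L, lip_with g L.

Definition Lip (g : X -> R) : R := inf [set L | lip_with g L].

Definition is_bdd (f : X -> R) : Prop := exists M : R, forall x, `|f x| <= M.

Variable n : nat.

(* pi = (pi^(1),...,pi^(n)) : X -> R^n, encoded componentwise *)
Definition lip_tuple (pi : 'I_n -> X -> R) : Prop := forall i, is_lip (pi i).

Definition inD (f : X -> R) (pi : 'I_n -> X -> R) : Prop :=
  [/\ is_bdd f, is_lip f & lip_tuple pi].

Definition upd (pi : 'I_n -> X -> R) (i : 'I_n) (h : X -> R) : 'I_n -> X -> R :=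
  fun j => if j == i then h else pi j.

Definition multilinear (T : (X -> R) -> ('I_n -> X -> R) -> R) : Prop :=
  (forall f g pi (a b : R), inD f pi -> inD g pi ->
     T (fun x => a * f x + b * g x) pi = a * T f pi + b * T g pi) /\
  (forall f pi i g h (a b : R), inD f pi -> is_lip g -> is_lip h ->
     T f (upd pi i (fun x => a * g x + b * h x))
     = a * T f (upd pi i g) + b * T f (upd pi i h)).

Definition Linf (pi : 'I_n -> X -> R) : R := \big[Num.max/0]_(i < n) Lip (pi i).

Definition locality (T : (X -> R) -> ('I_n -> X -> R) -> R) : Prop :=
  forall f pi i, inD f pi ->
    (exists U : set X, [/\ dopen U, spt f `<=` U &
        exists c : R, forall x, U x -> pi i x = c]) ->
    T f pi = 0.

Definition continuity_AK (T : (X -> R) -> ('I_n -> X -> R) -> R) : Prop :=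
  forall f (pis : nat -> 'I_n -> X -> R) (pi : 'I_n -> X -> R),
    is_bdd f -> is_lip f -> (forall k, lip_tuple (pis k)) -> lip_tuple pi ->
    (forall i x, (fun k => pis k i x) @ \oo --> pi i x) ->
    (exists C : R, forall k j, Lip (pis k j) <= C) ->
    (fun k => T f (pis k)) @ \oo --> T f pi.

Definition continuity_L (L : ('I_n -> X -> R) -> R)
    (T : (X -> R) -> ('I_n -> X -> R) -> R) : Prop :=
  forall f (pis : nat -> 'I_n -> X -> R) (pi : 'I_n -> X -> R),
    is_bdd f -> is_lip f -> (forall k, lip_tuple (pis k)) -> lip_tuple pi ->
    (forall i x, (fun k => pis k i x) @ \oo --> pi i x) ->
    (exists C : R, forall k, L (pis k) <= C) ->
    (fun k => T f (pis k)) @ \oo --> T f pi.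

End MetricDefs.

Section MeasureDefs.
Variables (R : realType) (X : pointedType) (d : X -> X -> R) (n : nat).

Definition borel_space := g_sigma_algebraType (dopen d).

Local Open Scope ereal_scope.

Definition mass_bound (w : ('I_n -> X -> R) -> R)
    (T : (X -> R) -> ('I_n -> X -> R) -> R)
    (mu : {finite_measure set borel_space -> \bar R}) : Prop :=
  forall f pi, inD d f pi ->
    (`|T f pi|)%:E <= (w pi)%:E * \int[mu]_x (`|f x|)%:E.

Definition is_min_mass (w : ('I_n -> X -> R) -> R)
    (T : (X -> R) -> ('I_n -> X -> R) -> R)
    (mu : {finite_measure set borel_space -> \bar R}) : Prop :=
  mass_bound w T mu /\
  forall nu : {finite_measure set borel_space -> \bar R},
    mass_bound w T nu -> forall A : set borel_space, measurable A -> mu A <= nu A.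

Local Close Scope ereal_scope.

Definition prodLip (pi : 'I_n -> X -> R) : R := \prod_(i < n) Lip d (pi i).

Definition is_current (T : (X -> R) -> ('I_n -> X -> R) -> R) : Prop :=
  [/\ continuity_AK d T, locality d T &
      exists mu, mass_bound prodLip T mu].

Definition is_L_current (L : ('I_n -> X -> R) -> R)
    (T : (X -> R) -> ('I_n -> X -> R) -> R) : Prop :=
  [/\ continuity_L d L T, locality d T &
      exists mu, mass_bound (fun pi => L pi ^+ n) T mu].

Definition is_mass_measure (T : (X -> R) -> ('I_n -> X -> R) -> R) mu : Prop :=
  is_min_mass prodLip T mu.

Definition is_L_mass_measure (L : ('I_n -> X -> R) -> R)
    (T : (X -> R) -> ('I_n -> X -> R) -> R) mu : Prop :=
  is_min_mass (fun pi => L pi ^+ n) T mu.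

End MeasureDefs.

Arguments is_mass_measure {R X} d {n} T mu.
Arguments is_L_mass_measure {R X} d {n} L T mu.
Arguments is_min_mass {R X} d {n} w T mu.
Arguments mass_bound {R X} d {n} w T mu.

(* Main.v *)
Require Import Defs.
From HB Require Import structures.
From mathcomp Require Import all_boot all_order all_algebra.
From mathcomp Require Import all_classical all_reals all_analysis.
Local Open Scope ring_scope.
Import Order.TTheory GRing.Theory Num.Theory.
Set Implicit Arguments.

Section Helpers.
Variables (R : realType) (X : Type) (d : X -> X -> R).
Hypothesis dm : is_metric d.

Lemma lip_Lip g : is_lip d g -> lip_with d g (Lip d g).
Proof.
case: dm => d0 dxx _ _.
move=> [L0 hL0].
have ne : ([set L | lip_with d g L] !=set0)%classic by exists L0.
have lb : lbound [set L | lip_with d g L] 0 by move=> L [].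
split; first exact: lb_le_inf.
move=> x y.
have [dz|dnz] := eqVneq (d x y) 0.
  move: ((dxx x y).1 dz) => ->; by rewrite subrr normr0 mulr_ge0 // lb_le_inf.
have dpos : 0 < d x y by rewrite lt_def dnz d0.
rewrite -ler_pdivrMr //.
apply: lb_le_inf => // L [_ hL].
by rewrite ler_pdivrMr.
Qed.

Lemma Lip_ge0 g : is_lip d g -> 0 <= Lip d g.
Proof. by move/lip_Lip => []. Qed.

Lemma Lip_le g L : lip_with d g L -> Lip d g <= L.
Proof.
move=> hL; apply: ge_inf => //; exists 0 => M [].
by [].
Qed.

Lemma lip_scale g c L : 0 <= c -> lip_with d g L ->
  lip_with d (fun x => c * g x) (c * L).
Proof.
move=> c0 [L0 hL]; split; first exact: mulr_ge0.
move=> x y; rewrite -mulrBr normrM ger0_norm // -mulrA.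
exact: ler_wpM2l.
Qed.

Lemma Lip_scale_le g c : 0 <= c -> is_lip d g ->
  Lip d (fun x => c * g x) <= c * Lip d g.
Proof. by move=> c0 /lip_Lip h; apply: Lip_le; apply: lip_scale. Qed.

Lemma is_lip_scale g c : 0 <= c -> is_lip d g -> is_lip d (fun x => c * g x).
Proof. by move=> c0 /lip_Lip h; eexists; apply: lip_scale h. Qed.

Variable n : nat.

Lemma Linf_ge0 (pi : 'I_n -> X -> R) : 0 <= Linf d pi.
Proof.
rewrite /Linf; elim/big_rec: _ => // i x _ hx.
by rewrite le_max hx orbT.
Qed.

Lemma Lip_le_Linf (pi : 'I_n -> X -> R) i : Lip d (pi i) <= Linf d pi.
Proof. exact: (le_bigmax 0 (fun j => Lip d (pi j)) i). Qed.

Lemma Linf_le (pi : 'I_n -> X -> R) C : 0 <= C ->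
  (forall i, Lip d (pi i) <= C) -> Linf d pi <= C.
Proof. by move=> C0 h; apply: bigmax_le. Qed.

End Helpers.

From mathcomp Require Import lra.

Section Main.
Variables (R : realType) (X : pointedType) (d : X -> X -> R) (n : nat).
Variable T : (X -> R) -> ('I_n -> X -> R) -> R.
Hypothesis dm : is_metric d.
Hypothesis ml : multilinear d T.
Implicit Types (pi sg : 'I_n -> X -> R) (f : X -> R).

Lemma inD_upd_scale f pi i c : inD d f pi -> 0 <= c ->
  inD d f (upd pi i (fun x => c * pi i x)).
Proof.
case=> hb hl ht c0; split => // j; rewrite /upd; case: eqP => // _.
exact: is_lip_scale.
Qed.

Lemma T_scale1 f pi i c : inD d f pi ->
  T f (upd pi i (fun x => c * pi i x)) = c * T f pi.
Proof.
case: ml => _ ml2 hD.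
have hl : is_lip d (pi i) by case: hD => _ _ /(_ i).
have := ml2 f pi i (pi i) (pi i) c 0 hD hl hl.
have -> : (fun x => c * pi i x + 0 * pi i x) = (fun x => c * pi i x).
  by apply: funext => x; rewrite mul0r addr0.
have -> : upd pi i (pi i) = pi.
  by apply: funext => j; rewrite /upd; case: eqP => // ->.
by rewrite mul0r addr0.
Qed.

Lemma inD_cond f pi (s : 'I_n -> R) (P : 'I_n -> bool) : inD d f pi ->
  (forall j, 0 <= s j) ->
  inD d f (fun (j : 'I_n) x => if P j then s j * pi j x else pi j x).
Proof.
case=> hb hl ht s0; split => // j; case: (P j) => //.
exact: is_lip_scale.
Qed.

Lemma T_scale f pi (s : 'I_n -> R) : inD d f pi -> (forall j, 0 <= s j) ->
  T f (fun (j : 'I_n) x => s j * pi j x) = (\prod_(j < n) s j) * T f pi.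
Proof.
move=> hD s0.
have H : forall k, (k <= n)%N ->
  T f (fun (j : 'I_n) x => if (j < k)%N then s j * pi j x else pi j x)
  = (\prod_(j < n | (j < k)%N) s j) * T f pi.
  elim => [|k IH] hk.
    rewrite big_pred0 // mul1r; congr (T f _).
  have hk' : (k < n)%N by [].
  pose o := Ordinal hk'.
  have E : (fun (j : 'I_n) x => if (j < k.+1)%N then s j * pi j x else pi j x)
    = upd (fun (j : 'I_n) x => if (j < k)%N then s j * pi j x else pi j x) o
       (fun x => s o * (fun (j : 'I_n) x => if (j < k)%N then s j * pi j x else pi j x) o x).
    apply: funext => j; apply: funext => x; rewrite /upd.
    case: eqP => [->|/eqP ne] /=; first by rewrite ltnSn ltnn.
    rewrite ltnS leq_eqVlt.
    have -> : (nat_of_ord j == k) = false by apply/negbTE.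
    by [].
  rewrite E T_scale1; last exact: inD_cond.
  rewrite IH ?(ltnW hk') // mulrA; congr (_ * _).
  rewrite [RHS](bigD1 o) //=; congr (_ * _); apply: eq_bigl => j.
  have [->|ne] := eqVneq j o; first by rewrite andbF /= ltnn.
  rewrite andbT ltnS [(j <= k)%N]leq_eqVlt.
  have -> : (nat_of_ord j == k) = false by apply/negbTE.
  by [].
rewrite -(eq_bigl _ _ (fun j : 'I_n => ltn_ord j)) -H //.
congr (T f _); apply: funext => j; apply: funext => x; by rewrite ltn_ord.
Qed.

Lemma int_fin (mu : {finite_measure set borel_space d -> \bar R}) f :
  is_bdd f -> (\int[mu]_x (`|f x|)%:E)%E \is a fin_num.
Proof.
case=> M hM.
have M0 : 0 <= M by exact: le_trans (normr_ge0 _) (hM point).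
rewrite ge0_fin_numE; last by apply: integral_ge0 => x _; rewrite lee_fin.
apply: (@le_lt_trans _ _ (M%:E * mu setT)%E).
  rewrite -(integral_cst mu measurableT M%:E).
  rewrite ge0_integralTE; last by move=> x; rewrite lee_fin.
  rewrite ge0_integralTE; last by move=> x; rewrite lee_fin.
  apply: ereal_sup_le => _ [h hh <-]; exists h => //= x.
  apply: le_trans (hh x) _; by rewrite lee_fin hM.
by rewrite ltey_eq fin_numM // fin_num_measure.
Qed.

Lemma mass_equiv (mu : {finite_measure set borel_space d -> \bar R}) :
  (1 <= n)%N ->
  mass_bound d (@prodLip R X d n) T mu <-> mass_bound d (fun pi => Linf d pi ^+ n) T mu.
Proof.
move=> n1; split.
  move=> H f pi hD; apply: le_trans (H f pi hD) _.
  apply: lee_wpmul2r; first by apply: integral_ge0 => x _; rewrite lee_fin.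
  rewrite lee_fin /prodLip.
  have -> : Linf d pi ^+ n = \prod_(i < n) Linf d pi by rewrite prodr_const card_ord.
  apply: ler_prod => i _; rewrite Lip_ge0 ?Lip_le_Linf //.
  by case: hD => _ _ /(_ i).
move=> H f pi hD.
have fin := int_fin mu (let: And3 b _ _ := hD in b).
set I := (\int[mu]_x _)%E in fin *.
have Ir : I = (fine I)%:E by rewrite fineK.
have r0 : 0 <= fine I by apply: fine_ge0; apply: integral_ge0 => x _; rewrite lee_fin.
have H' : forall sg, inD d f sg -> `|T f sg| <= Linf d sg ^+ n * fine I.
  by move=> sg hs; have := H f sg hs; rewrite -/I Ir -EFinM lee_fin.
rewrite Ir -EFinM lee_fin.
have hl : forall j, is_lip d (pi j) by case: hD.
have [[i Li0]|allpos] := pselect (exists i, Lip d (pi i) = 0).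
  have T0 : T f pi = 0.
    apply/eqP; apply: contraT => nz.
    set B := Linf d pi ^+ n * fine I.
    have B0 : 0 <= B by rewrite mulr_ge0 // exprn_ge0 // Linf_ge0.
    have Tp : 0 < `|T f pi| by rewrite normr_gt0.
    pose t := (B + 1) / `|T f pi|.
    have tpos : 0 < t by rewrite divr_gt0 // ltr_wpDl.
    have := H' _ (inD_upd_scale i t hD (ltW tpos)).
    rewrite T_scale1 // normrM gtr0_norm // /t divfK ?gt_eqF //.
    have Lσ : Linf d (upd pi i (fun x => t * pi i x)) <= Linf d pi.
      apply: Linf_le; first exact: Linf_ge0.
      move=> j; rewrite /upd; case: eqP => _; last exact: Lip_le_Linf.
      apply: le_trans (Lip_scale_le dm t (ltW tpos) (hl i)) _.
      by rewrite Li0 mulr0 Linf_ge0.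
    have : Linf d (upd pi i (fun x => t * pi i x)) ^+ n * fine I <= B.
      apply: ler_wpM2r => //; apply: lerXn2r => //;
        by rewrite qualifE /= Linf_ge0.
    move=> h1 h2; have := le_trans h2 h1; lra.
  rewrite T0 normr0 mulr_ge0 // prodr_ge0 // => j _; exact: Lip_ge0.
have Lp : forall j, 0 < Lip d (pi j).
  move=> j; rewrite lt_def Lip_ge0 // andbT; apply/eqP => h.
  by apply: allpos; exists j.
pose s j := (Lip d (pi j))^-1.
have s0 : forall j, 0 <= s j by move=> j; rewrite invr_ge0 ltW.
have hs : inD d f (fun (j : 'I_n) x => s j * pi j x).
  case: hD => hb hl' ht; split => // j; exact: is_lip_scale.
have := H' _ hs; rewrite T_scale //.
have L1 : Linf d (fun (j : 'I_n) x => s j * pi j x) <= 1.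
  apply: Linf_le => // j.
  apply: le_trans (Lip_scale_le dm (s j) (s0 j) (hl j)) _.
  by rewrite /s mulVf // gt_eqF.
have L1n : Linf d (fun (j : 'I_n) x => s j * pi j x) ^+ n <= 1 by rewrite exprn_ile1 // Linf_ge0.
move=> h; have {h} h : `|\prod_(j < n) s j * T f pi| <= fine I.
  apply: le_trans h _; rewrite -[X in (_ <= X)%R]mul1r; exact: ler_wpM2r.
move: h; rewrite normrM ger0_norm ?prodr_ge0 // /s prodfV ler_pdivrMl //.
exact: prodr_gt0.
Qed.

Lemma cont_equiv : continuity_AK d T <-> continuity_L d (Linf d (n:=n)) T.
Proof.
split=> H f pis pi hb hl hk hp hc [C hC]; apply: H => //.
  by exists C => k j; apply: le_trans (hC k); exact: Lip_le_Linf.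
exists (Num.max C 0) => k; apply: Linf_le => [|j]; first by rewrite le_max lexx orbT.
by rewrite le_max hC.
Qed.

End Main.

Theorem proposition1p2 (R : realType) (X : pointedType) (d : X -> X -> R)
    (n : nat) (T : (X -> R) -> ('I_n -> X -> R) -> R) :
  is_metric d -> dcomplete d -> (1 <= n)%N -> multilinear d T ->
  (is_current d T <-> is_L_current d (Linf d (n:=n)) T) /\
  (forall mu : {finite_measure set borel_space d -> \bar R},
     is_mass_measure d T mu <-> is_L_mass_measure d (Linf d (n:=n)) T mu).
Proof.
move=> dm _ n1 ml; split.
  split; case=> hc hloc [mu hmu]; (split; [ | by [] | exists mu]).
  - by apply/cont_equiv.
  - by apply/(mass_equiv dm ml mu n1).
  - by apply/cont_equiv.
  - by apply/(mass_equiv dm ml mu n1).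
move=> mu; rewrite /is_mass_measure /is_L_mass_measure /is_min_mass.
split; case=> h1 h2; split.
- by apply/(mass_equiv dm ml mu n1).
- by move=> nu /(mass_equiv dm ml nu n1); exact: h2.
- by apply/(mass_equiv dm ml mu n1).
- by move=> nu /(mass_equiv dm ml nu n1); exact: h2.
Qed.
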